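(* Let $\Omega$ be a complete separable metric space, and let $\{\mathbb{E}_{\alpha}\}_{\alpha\in\mathcal{A}}$ be a family of nonlinear expectations on $(\Omega,C_b(\Omega))$. Suppose there exists a tight sublinear expectation $\hat{\mathbb{E}}$ on $(\Omega,B_b(\Omega))$ such that for every $\alpha\in\mathcal{A}$, \[ \mathbb{E}_{\alpha}[X]-\mathbb{E}_{\alpha}[Y]\le \hat{\mathbb{E}}[X-Y],\qquad X,Y\in C_b(\Omega). \] Then $\{\mathbb{E}_{\alpha}\}_{\alpha\in\mathcal{A}}$ is weakly compact: for each sequence $\{\mathbb{E}_{\alpha_n}\}_{n=1}^{\infty}$ there exists a subsequence $\{\mathbb{E}_{\alpha_{n_i}}\}_{i=1}^{\infty}$ such that for every $\varphi\in C_b(\Omega)$, the real sequence $\{\mathbb{E}_{\alpha_{n_i}}[\varphi]\}_{i=1}^{\infty}$ is a Cauchy sequence.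
   Context: $B_b(\Omega)$ denotes the space of bounded Borel-measurable real functions on $\Omega$ and $C_b(\Omega)$ the bounded continuous real functions on $\Omega$. For a linear space $\mathcal{H}$ of real functions on $\Omega$ containing the constants, a nonlinear expectation is a functional $\mathbb{E}:\mathcal{H}\to\mathbb{R}$ with $\mathbb{E}[c]=c$ for constants $c$ and $\mathbb{E}[X]\ge\mathbb{E}[Y]$ whenever $X\ge Y$. It is a sublinear expectation if in addition $\mathbb{E}[X+Y]\le\mathbb{E}[X]+\mathbb{E}[Y]$ and $\mathbb{E}[\lambda X]=\lambda\mathbb{E}[X]$ for $\lambda\ge 0$. A sublinear expectation $\hat{\mathbb{E}}$ on $(\Omega,B_b(\Omega))$ is tight if for each $\varepsilon>0$ there is a compact $K\subset\Omega$ with $\hat{\mathbb{E}}[\mathbf{1}_{K^c}]<\varepsilon$. *)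

(* Defs.v *)
From HB Require Import structures.
From mathcomp Require Import all_boot all_order all_algebra.
From mathcomp Require Import all_classical all_reals all_analysis.
Set Implicit Arguments. Unset Strict Implicit. Unset Printing Implicit Defensive.
Import Order.TTheory GRing.Theory Num.Theory.
Import numFieldNormedType.Exports.
Local Open Scope classical_set_scope.
Local Open Scope ring_scope.

Definition separable_space (T : topologicalType) : Prop :=
  exists D : set T, countable D /\ dense D.

Definition bounded_fun (R : realType) (T : Type) (f : T -> R) : Prop :=
  exists M : R, forall x, `|f x| <= M.

Definition Cb (R : realType) (T : topologicalType) (f : T -> R) : Prop :=
  continuous f /\ bounded_fun f.

Definition borel_set (T : topologicalType) (A : set T) : Prop :=
  <<s [set U : set T | open U] >> A.

Definition Bb (R : realType) (T : topologicalType) (f : T -> R) : Prop :=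
  (forall B : set R, measurable B -> borel_set (f @^-1` B)) /\ bounded_fun f.

Definition nonlinear_expectation (R : realType) (T : Type)
    (H : (T -> R) -> Prop) (E : (T -> R) -> R) : Prop :=
  (forall c : R, E (fun _ => c) = c) /\
  (forall X Y, H X -> H Y -> (forall w, Y w <= X w) -> E Y <= E X).

Definition sublinear_expectation (R : realType) (T : Type)
    (H : (T -> R) -> Prop) (E : (T -> R) -> R) : Prop :=
  nonlinear_expectation H E /\
  (forall X Y, H X -> H Y -> E (X \+ Y) <= E X + E Y) /\
  (forall (lam : R) X, H X -> 0 <= lam -> E (fun w => lam * X w) = lam * E X).

Definition tight (R : realType) (T : topologicalType) (E : (T -> R) -> R) : Prop :=
  forall eps : R, 0 < eps ->
    exists K : set T, compact K /\ E (\1_(~` K)) < eps.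

Definition cauchy_seqR (R : realType) (u : nat -> R) : Prop :=
  forall eps : R, 0 < eps -> exists N : nat,
    forall i j : nat, (N <= i)%N -> (N <= j)%N -> `|u i - u j| < eps.

(* Main.v *)
Require Import Defs.
From HB Require Import structures.
From mathcomp Require Import all_boot all_order all_algebra.
From mathcomp Require Import all_classical all_reals all_analysis.
From mathcomp Require Import ring lra.
Import Order.TTheory GRing.Theory Num.Theory.
Import numFieldNormedType.Exports.
Local Open Scope classical_set_scope.
Local Open Scope ring_scope.
Set Implicit Arguments. Unset Strict Implicit. Unset Printing Implicit Defensive.

Section dist.
Variables (R : realType) (X : pseudoMetricType R).

Definition dS (x y : X) : set R := [set r : R | 0 < r /\ (1 <= r \/ ball x r y)].
Definition dT (x y : X) : R := inf (dS x y).

Lemma dS1 x y : dS x y 1.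
Proof. by split => //; left. Qed.

Lemma dS_lb x y : has_lbound (dS x y).
Proof. by exists 0 => r [/ltW]. Qed.

Lemma dT_ge0 x y : 0 <= dT x y.
Proof. apply: lb_le_inf; first by exists 1; exact: dS1. by move=> r [/ltW]. Qed.

Lemma dT_le x y r : 0 < r -> (1 <= r \/ ball x r y) -> dT x y <= r.
Proof. by move=> r0 h; apply: ge_inf; [exact: dS_lb|split]. Qed.

Lemma dT_le1 x y : dT x y <= 1.
Proof. by apply: dT_le => //; left. Qed.

Lemma dT_ball x y r : 0 < r -> ball x r y -> dT x y <= r.
Proof. by move=> r0 b; apply: dT_le => //; right. Qed.

Lemma dT_lt x y r : dT x y < r -> r <= 1 -> ball x r y.
Proof.
move=> dr r1.
have [e [e0 He] elt] := @inf_adherent _ (dS x y) (r - dT x y)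
  ltac:(by rewrite subr_gt0) (conj (ex_intro _ 1 (dS1 x y)) (dS_lb x y)).
rewrite addrC subrK in elt.
case: He => [e1|b]; first by move: (lt_le_trans elt r1); rewrite ltNge e1.
by apply: le_ball b; apply: ltW.
Qed.

Lemma dS_sym x y : dS x y = dS y x.
Proof.
apply/seteqP; split => r [r0 [h|h]]; split=> //; (try by left); right;
  exact: ball_sym.
Qed.

Lemma dT_sym x y : dT x y = dT y x.
Proof. by rewrite /dT dS_sym. Qed.

Lemma dT_tri x y z : dT x z <= dT x y + dT y z.
Proof.
apply/ler_addgt0Pr => e e0.
have hS a b : has_inf (dS a b) := conj (ex_intro _ 1 (dS1 a b)) (dS_lb a b).
have e20 : 0 < e / 2 by rewrite divr_gt0.
have [r1 [r10 H1] lt1] := inf_adherent e20 (hS x y).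
have [r2 [r20 H2] lt2] := inf_adherent e20 (hS y z).
have : dT x z <= r1 + r2.
  apply: dT_le; first by rewrite addr_gt0.
  case: H1 => [h1|b1]; first by left; rewrite -[1]addr0 lerD // ltW.
  case: H2 => [h2|b2]; first by left; rewrite -[1]add0r lerD // ltW.
  by right; exact: ball_triangle b1 b2.
move=> /le_trans; apply.
rewrite /dT; have -> : inf (dS x y) + inf (dS y z) + e =
   (inf (dS x y) + e / 2) + (inf (dS y z) + e / 2).
  by rewrite addrACA -splitr.
by rewrite lerD // ltW.
Qed.

Lemma dT_cont p : continuous (dT p).
Proof.
move=> x; apply/cvgrPdist_lt => e e0.
have m0 : 0 < Num.min (e / 2) 1 by rewrite lt_min divr_gt0 // ltr01.
near=> y.
have bxy : ball x (Num.min (e / 2) 1) y by near: y; exact: nbhsx_ballx.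
have dxy : dT x y <= Num.min (e / 2) 1 by exact: dT_ball.
have h1 := dT_tri p x y; have h2 := dT_tri p y x.
rewrite (dT_sym y x) in h2.
have m1 : Num.min (e / 2) 1 <= e / 2 by rewrite ge_min lexx.
have lt : dT x y < e by apply: (le_lt_trans dxy); apply: (le_lt_trans m1); rewrite ltr_pdivrMr // ltr_pMr // ltr1n.
rewrite ltr_distlC; apply/andP; split; lra.
Unshelve. all: by end_near.
Qed.
End dist.
Section cone.
Variables (R : realType) (X : pseudoMetricType R).
Variable e : nat -> X.

Definition term (L N : nat) (pz : nat * int) (x : X) : R :=
  pz.2%:~R / N.+1%:R - L%:R * dT (e pz.1) x.

Definition cone (Mc L N : nat) (s : seq (nat * int)) (x : X) : R :=
  foldr (fun pz acc => Num.max acc (term L N pz x)) (- Mc%:R) s.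

Definition psi (Mc L N : nat) (s : seq (nat * int)) (x : X) : R :=
  Num.min Mc%:R (cone Mc L N s x).

Lemma term_cont L N pz : continuous (term L N pz).
Proof.
move=> x; apply: (@continuousB _ R^o _ (fun _ => pz.2%:~R / N.+1%:R) (fun x => L%:R * dT (e pz.1) x)).
  exact: cst_continuous.
apply: continuousM; first exact: cst_continuous.
exact: dT_cont.
Qed.

Lemma cone_cont Mc L N s : continuous (cone Mc L N s).
Proof.
elim: s => [|pz s IH] x.
  have -> : cone Mc L N [::] = fun _ => - Mc%:R by [].
  exact: cst_continuous.
have -> : cone Mc L N (pz :: s) = (cone Mc L N s) \max (term L N pz) by [].
apply: continuous_max; [exact: IH|exact: term_cont].
Qed.

Lemma psi_cont Mc L N s : continuous (psi Mc L N s).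
Proof.
move=> x; have -> : psi Mc L N s = (fun _ => Mc%:R) \min (cone Mc L N s) by [].
apply: continuous_min; [exact: cst_continuous|exact: cone_cont].
Qed.

Lemma cone_ge_init Mc L N s x : - Mc%:R <= cone Mc L N s x.
Proof. by elim: s => [|pz s IH] //=; rewrite le_max IH. Qed.

Lemma cone_ge_term Mc L N s x pz : pz \in s -> term L N pz x <= cone Mc L N s x.
Proof.
elim: s => [|pz' s IH] //=; rewrite in_cons => /orP[/eqP ->|h].
  by rewrite le_max lexx orbT.
by rewrite le_max IH.
Qed.

Lemma cone_le Mc L N s x b : (forall pz, pz \in s -> term L N pz x <= b) ->
  cone Mc L N s x <= Num.max (- Mc%:R) b.
Proof.
elim: s => [|pz s IH] H /=; first by rewrite le_max lexx.
rewrite ge_max IH; last by move=> q qs; apply: H; rewrite in_cons qs orbT.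
by rewrite le_max H ?orbT // in_cons eqxx.
Qed.

Lemma psi_bound Mc L N s x : `|psi Mc L N s x| <= Mc%:R.
Proof.
rewrite ler_norml /psi ge_min lexx /= andbT le_min cone_ge_init andbT.
by have := ler0n R Mc; lra.
Qed.

End cone.
Section compactness.
Variables (R : realType) (X : pseudoMetricType R).

Lemma arch_inv (r : R) : 0 < r -> exists N : nat, N.+1%:R^-1 < r.
Proof.
move=> r0; exists (Num.truncn r^-1).
rewrite invf_plt ?posrE ?ltr0n //; exact: truncnS_gt.
Qed.


Lemma unif_cont (K : set X) (phi : X -> R) (eps : R) :
  compact K -> continuous phi -> 0 < eps ->
  exists d, 0 < d /\ forall x y, K x -> ball x d y -> `|phi x - phi y| < eps.
Proof.
move=> /compact_near_coveringP cK cphi e0.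
have e20 : 0 < eps / 2 by rewrite divr_gt0.
have := cK nat \oo
  (fun n x' => forall y, ball x' (n.+1%:R^-1) y -> `|phi x' - phi y| < eps) _.
case.
- move=> x Kx.
  have /cvgrPdist_lt/(_ _ e20) := cphi x.
  move=> /nbhs_ballP [r /= r0 Hr].
  have r20 : 0 < r / 2 by rewrite divr_gt0.
  have [N HN] := arch_inv r20.
  exists (ball x (r / 2), [set n | (N <= n)%N]).
    by split => //=; [exact: nbhsx_ballx|exists N].
  case=> x' n /= [bx' Nn] y by'.
  have bxy : ball x r y.
    rewrite [r]splitr; apply: ball_triangle bx' _.
    apply: le_ball by'; apply: ltW; apply: le_lt_trans HN.
    by rewrite lef_pV2 ?posrE ?ltr0n // ler_nat.
  have r2r : r / 2 <= r by rewrite ler_pdivrMr // ler_pMr // ler1n.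
  have h1 := Hr _ (le_ball r2r bx').
  have h2 := Hr _ bxy.
  rewrite [eps]splitr; apply: le_lt_trans (ler_distD (phi x) _ _) _.
  by rewrite distrC ltrD.
- move=> N _ HN; exists (N.+1%:R^-1); split; first by rewrite invr_gt0 ltr0n.
  by move=> x y Kx; apply: (HN N (leqnn N)).
Qed.

Lemma finite_net (e : nat -> X) (K : set X) (eta : R) :
  (forall x r, 0 < r -> exists j, ball x r (e j)) ->
  compact K -> 0 < eta ->
  exists n : nat, forall x, K x -> exists j, (j < n)%N /\ ball (e j) eta x.
Proof.
move=> de /compact_near_coveringP cK e0.
have e20 : 0 < eta / 2 by rewrite divr_gt0.
have := cK nat \oo (fun n x' => exists j, (j < n)%N /\ ball (e j) eta x') _.
case.
- move=> x Kx.
  have [j bj] := de x _ e20.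
  exists (ball x (eta / 2), [set n | (j.+1 <= n)%N]).
    by split => //=; [exact: nbhsx_ballx|exists j.+1].
  case=> x' n /= [bx' jn]; exists j; split => //.
  rewrite [eta]splitr; apply: ball_triangle bx'.
  exact: ball_sym.
- by move=> N _ HN; exists N; apply: (HN N (leqnn N)).
Qed.
End compactness.
Section approx.
Variables (R : realType) (X : pseudoMetricType R).

Lemma approx (e : nat -> X) (K : set X) (phi : X -> R) (M eps : R) (Mc : nat) :
  (forall x r, 0 < r -> exists j, ball x r (e j)) ->
  compact K -> continuous phi -> (forall x, `|phi x| <= M) -> 0 < eps ->
  M <= Mc%:R ->
  exists L N s, forall x, K x -> `|phi x - psi e Mc L N s x| <= eps.
Proof.
move=> de cK cphi phiM e0 MMc.
have e40 : 0 < eps / 4 by rewrite divr_gt0.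
have [d0 [d00 Hd0]] := unif_cont cK cphi e40.
pose d := Num.min d0 1.
have d0' : 0 < d by rewrite lt_min d00 ltr01.
have dd0 : d <= d0 by rewrite ge_min lexx.
have d1 : d <= 1 by rewrite ge_min lexx orbT.
pose L := (Num.truncn ((2 * M + eps) / d)).+1.
have HL : 2 * M + eps <= L%:R * d.
  rewrite -ler_pdivrMr //; apply: ltW; exact: truncnS_gt.
have L0 : 0 < L%:R :> R by rewrite ltr0n.
pose eta := Num.min d (eps / (4 * L%:R)).
have eta0 : 0 < eta by rewrite lt_min d0' divr_gt0 // mulr_gt0 // ltr0n.
have etad : eta <= d by rewrite ge_min lexx.
have Leta : L%:R * eta <= eps / 4.
  have h : eta <= eps / (4 * L%:R) by rewrite ge_min lexx orbT.
  apply: (le_trans (ler_wpM2l (ltW L0) h)).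
  have L0' : L%:R != 0 :> R by rewrite lt0r_neq0.
  by rewrite le_eqVlt; apply/orP; left; apply/eqP; field.
have [n Hn] := finite_net de cK eta0.
have [N HN] := arch_inv e40.
pose s := map (fun j => (j, Num.floor (phi (e j) * N.+1%:R))) (iota 0 n).
exists L, N, s => x Kx.
pose w : R := N.+1%:R^-1.
have w0 : 0 < w by rewrite invr_gt0 ltr0n.
have ww : N.+1%:R * w = 1 by rewrite mulfV // lt0r_neq0 // ltr0n.
have fq j : phi (e j) - eps / 4 <= (Num.floor (phi (e j) * N.+1%:R))%:~R / N.+1%:R <= phi (e j).
  have /andP[h1 h2] := mem_rg1_floor (phi (e j) * N.+1%:R).
  set z : R := (Num.floor _)%:~R in h1 h2 *.
  have k1 := ler_wpM2r (ltW w0) h1.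
  rewrite -mulrA ww mulr1 in k1.
  have k3 : phi (e j) < z * w + w.
    by move: h2; rewrite -(ltr_pM2r w0) -mulrA ww mulr1 mulrDl mul1r.
  have HN' : w < eps / 4 by [].
  apply/andP; split; rewrite -/w; lra.
have phiMx y : - M <= phi y <= M by rewrite -ler_norml.
have Hd x' y : K x' -> ball x' d0 y -> phi x' - eps / 4 < phi y < phi x' + eps / 4.
  by move=> Kx' b; rewrite -ltr_distlC; exact: Hd0.
have Lge0 : 0 <= L%:R :> R by rewrite ler0n.
have up : forall pz, pz \in s -> term e L N pz x <= phi x + eps / 4.
  move=> pz /mapP [j _ ->]; rewrite /term /=.
  have /andP[q1 q2] := fq j.
  set q := _ / N.+1%:R in q1 q2 *.
  have dge := dT_ge0 (e j) x.
  case: (ltP (dT (e j) x) d) => h.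
    have b : ball x d0 (e j) by apply: (le_ball dd0); apply: ball_sym; exact: dT_lt.
    have /andP[a1 a2] := Hd x (e j) Kx b.
    have hh : 0 <= L%:R * dT (e j) x by rewrite mulr_ge0.
    lra.
  have hh : L%:R * d <= L%:R * dT (e j) x by rewrite ler_wpM2l.
  have /andP[m1 m2] := phiMx (e j).
  have /andP[m3 m4] := phiMx x.
  lra.
have [j [jn bj]] := Hn x Kx.
have js : (j, Num.floor (phi (e j) * N.+1%:R)) \in s.
  by apply/mapP; exists j => //; rewrite mem_iota.
have low := @cone_ge_term R X e Mc L N s x _ js.
have upc := @cone_le R X e Mc L N s x _ up.
have : term e L N (j, Num.floor (phi (e j) * N.+1%:R)) x >= phi x - 3 * eps / 4.
  rewrite /term /=.
  have /andP[q1 q2] := fq j.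
  set q := _ / N.+1%:R in q1 q2 *.
  have dle : dT (e j) x <= eta by exact: dT_ball.
  have hh : L%:R * dT (e j) x <= eps / 4.
    by apply: le_trans Leta; rewrite ler_wpM2l.
  have b : ball x d0 (e j).
    by apply: (le_ball (le_trans etad dd0)); apply: ball_sym.
  have /andP[a1 a2] := Hd x (e j) Kx b.
  lra.
move=> lowt.
have /andP[m3 m4] := phiMx x.
rewrite /psi ler_distlC; set c := cone _ _ _ _ _ in low upc *.
have mx : Num.max (- Mc%:R) (phi x + eps / 4) = phi x + eps / 4.
  by apply/max_idPr; lra.
rewrite mx in upc.
set t := term _ _ _ _ _ in low lowt.
apply/andP; split; first by rewrite le_min; apply/andP; split; lra.
by rewrite ge_min; apply/orP; right; lra.
Qed.

End approx.
Section borel.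
Variables (R : realType) (T : topologicalType).

Lemma borel_sa : sigma_algebra setT (@borel_set T).
Proof. exact: smallest_sigma_algebra. Qed.

Lemma borel_open U : open U -> @borel_set T U.
Proof. by move=> oU; apply: sub_gen_smallest. Qed.

Lemma borel0 : @borel_set T set0.
Proof. by case: borel_sa. Qed.

Lemma borelC U : @borel_set T U -> borel_set (~` U).
Proof. by case: borel_sa => _ hC _ /hC; rewrite setTD. Qed.

Lemma borelT : @borel_set T setT.
Proof. by rewrite -setC0; apply: borelC; exact: borel0. Qed.

Lemma cont_borel (f : T -> R) : continuous f ->
  forall B : set R, measurable B -> borel_set (f @^-1` B).
Proof.
move=> cf B mB.
have : (@ocitv R).-sigma.-measurable B by exact: mB.
rewrite measurable_realfun.RGenOpens.measurableE.
apply: (@smallest_sub _ _ _ [set B | borel_set (f @^-1` B)]).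
  split => /=.
  - by rewrite preimage_set0; exact: borel0.
  - by move=> A /borelC; rewrite setTD preimage_setC.
  - move=> F HF; rewrite preimage_bigcup.
    by case: borel_sa => _ _; apply.
move=> A [x [y ->]] /=; apply: borel_open.
by move: cf => /continuousP; apply; exact: interval_open.
Qed.

Lemma Cb_Bb (f : T -> R) : Cb f -> Bb f.
Proof. by case=> cf bf; split => //; exact: cont_borel. Qed.

Lemma twoval_Bb (U : set T) (a b : R) (g : T -> R) : borel_set U ->
  (forall x, U x -> g x = a) -> (forall x, ~ U x -> g x = b) -> Bb g.
Proof.
move=> bU ga gb; split; last first.
  exists (`|a| + `|b|) => x; have [Ux|nUx] := pselect (U x).
    by rewrite ga // lerDl.
  by rewrite gb // lerDr.
move=> B _.
have [Ba|nBa] := pselect (B a); have [Bb|nBb] := pselect (B b).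
- have -> : g @^-1` B = setT; last exact: borelT.
  apply/seteqP; split => x //= _; have [Ux|nUx] := pselect (U x).
    by rewrite ga. by rewrite gb.
- have -> : g @^-1` B = U => //.
  apply/seteqP; split => x /=; have [Ux|nUx] := pselect (U x) => //.
    by rewrite gb.
  by rewrite ga.
- have -> : g @^-1` B = ~` U; last exact: borelC.
  apply/seteqP; split => x /=; have [Ux|nUx] := pselect (U x) => //.
    by rewrite ga.
  by rewrite gb.
- have -> : g @^-1` B = set0; last exact: borel0.
  apply/seteqP; split => x //=; have [Ux|nUx] := pselect (U x).
    by rewrite ga. by rewrite gb.
Qed.

End borel.
Section diagonal.
Variable R : realType.

Lemma cauchy_sub (v : nat -> R) (w : nat -> R) (k : nat) :
  cauchy_seqR v -> (forall i, (k <= i)%N -> exists m, (i <= m)%N /\ w i = v m) ->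
  cauchy_seqR w.
Proof.
move=> cv hw eps e0; have [N HN] := cv eps e0.
exists (maxn N k) => i j; rewrite !geq_max => /andP[Ni ki] /andP[Nj kj].
have [mi [imi ->]] := hw i ki; have [mj [jmj ->]] := hw j kj.
by apply: HN; [exact: leq_trans imi|exact: leq_trans jmj].
Qed.

Lemma inc_ge (t : nat -> nat) : (forall i, (t i < t i.+1)%N) -> forall i, (i <= t i)%N.
Proof. by move=> h; elim => // i IH; apply: leq_ltn_trans IH (h i). Qed.

Lemma inc_homo (t : nat -> nat) : (forall i, (t i < t i.+1)%N) ->
  {homo t : i j / (i < j)%N >-> (i < j)%N}.
Proof. by move=> h; apply: homo_ltn => //; exact: ltn_trans. Qed.

Lemma bw_step (v : nat -> R) : (exists B, forall n, `|v n| <= B) ->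
  exists t : nat -> nat, (forall i, (t i < t i.+1)%N) /\ cauchy_seqR (v \o t).
Proof.
move=> [B HB].
have bv : bounded_fun v.
  rewrite /bounded_near; near=> M => n _ /=.
  apply: le_trans (HB n) _; near: M; apply: nbhs_pinfty_ge.
  exact: num_real.
have [t mt /cvg_ex [l /cvgrPdist_lt Hl]] := bolzano_weierstrass bv.
exists t; split.
  by move=> i; rewrite ltnNge; apply/negP => h; have := mt i.+1 i; move=> /= e; move: h; rewrite [X in is_true X -> _]e ltnn.
move=> eps e0; have e20 : 0 < eps / 2 by rewrite divr_gt0.
have [N _ HN] := Hl _ e20.
exists N => i j Ni Nj.
have h1 := HN i Ni; have h2 := HN j Nj.
rewrite /= in h1 h2 *.
rewrite [eps]splitr; apply: le_lt_trans (ler_distD l _ _) _.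
by rewrite distrC ltrD.
Unshelve. all: by end_near.
Qed.


Lemma diag (u : nat -> nat -> R) : (forall k, exists B, forall n, `|u k n| <= B) ->
  exists d : nat -> nat, {homo d : i j / (i < j)%N >-> (i < j)%N} /\
    forall k, cauchy_seqR (fun i => u k (d i)).
Proof.
move=> ub.
have : forall p : nat * (nat -> nat), exists t : nat -> nat,
    (forall i, (t i < t i.+1)%N) /\ cauchy_seqR ((fun n => u p.1 (p.2 n)) \o t).
  move=> [k s]; apply: bw_step; have [B HB] := ub k.
  by exists B => n; exact: HB.
move=> /choice [st Hst].
pose S := fix S k := match k with 0 => id | k'.+1 => S k' \o st (k', S k') end.
have Sinc k i : (S k i < S k i.+1)%N.
  elim: k i => [//|k IH] i /=.
  by apply: (inc_homo IH); case: (Hst (k, S k)).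
have Ssub k m : exists T : nat -> nat, (forall i, (T i < T i.+1)%N) /\
    forall i, S (m + k)%N i = S k (T i).
  elim: m => [|m [T [Tinc TS]]]; first by exists id.
  exists (T \o st (m + k, S (m + k)))%N; split.
    move=> i /=; apply: (inc_homo Tinc); by case: (Hst (m + k, S (m + k))%N).
  by move=> i; rewrite addSn /= TS.
exists (fun i => S i.+1 i); split.
  apply: inc_homo => i /=.
  have [h1 _] := Hst (i, S i); have [h2 _] := Hst (i.+1, S i.+1).
  change (S i.+1 i < S i.+1 (st (i.+1, S i.+1) i.+1))%N.
  exact: (inc_homo (Sinc i.+1)) (inc_ge h2 i.+1).
move=> k; have [_ ck] := Hst (k, S k).
apply: (@cauchy_sub _ _ k ck) => i ki.
have [T [Tinc TS]] := Ssub k.+1 (i - k)%N.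
exists (T i); split; first exact: inc_ge.
change (u k (S i.+1 i) = u k (S k.+1 (T i))).
by rewrite -TS addnS subnK.
Qed.
End diagonal.
Section expect.
Variables (R : realType) (T : topologicalType).

Lemma Cb_cst (c : R) : @Cb R T (fun _ => c).
Proof. split; first exact: cst_continuous. by exists `|c|. Qed.

Lemma Cb_sub (X Y : T -> R) : Cb X -> Cb Y -> Cb (X \- Y).
Proof.
move=> [cX [MX hX]] [cY [MY hY]]; split.
  by move=> x; apply: cvgB; [exact: cX|exact: cY].
exists (MX + MY) => x; apply: le_trans (ler_normB _ _) _.
by apply: lerD.
Qed.

Lemma E_bound (E : (T -> R) -> R) (f : T -> R) (B : R) :
  nonlinear_expectation (@Cb R T) E -> Cb f -> (forall x, `|f x| <= B) ->
  `|E f| <= B.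
Proof.
move=> [hc hm] cf fB.
have fB' w : - B <= f w <= B by rewrite -ler_norml.
have h1 := hm (fun _ => B) f (Cb_cst B) cf (fun w => proj2 (andP (fB' w))).
have h2 := hm f (fun _ => - B) cf (Cb_cst (- B)) (fun w => proj1 (andP (fB' w))).
rewrite hc in h1; rewrite hc in h2.
by rewrite ler_norml h1 h2.
Qed.


Lemma key (E : (T -> R) -> R) (Ehat : (T -> R) -> R) (K : set T)
  (phi ps : T -> R) (del c : R) :
  hausdorff_space T -> compact K ->
  sublinear_expectation (@Bb R T) Ehat ->
  (forall X Y, Cb X -> Cb Y -> E X - E Y <= Ehat (X \- Y)) ->
  Cb phi -> Cb ps -> 0 <= del -> 0 <= c ->
  (forall x, K x -> `|phi x - ps x| <= del) -> (forall x, `|phi x - ps x| <= c) ->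
  `|E phi - E ps| <= del + c * Ehat (\1_(~` K)).
Proof.
move=> hT cK [[hc hm] [hadd hhom]] hd cphi cps d0 c0 hK hall.
have oK : open (~` K) by apply: closed_openC; exact: compact_closed.
have bU : borel_set (~` K) := borel_open oK.
have indK x : K x -> \1_(~` K) x = 0 :> R.
  by move=> Kx; rewrite /indic memNset.
have indNK x : ~ K x -> \1_(~` K) x = 1 :> R.
  by move=> Kx; rewrite /indic mem_set.
pose h := (fun _ : T => del) \+ (fun w => c * \1_(~` K) w).
have hBb : Bb h.
  apply: (@twoval_Bb _ _ (~` K) (del + c) del);
    [exact: bU|move=> x nK; by rewrite /h /= (indNK x nK) mulr1
    |move=> x /contrapT nK; by rewrite /h /= (indK x nK) mulr0 addr0].
have iBb : Bb (\1_(~` K) : T -> R).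
  apply: (@twoval_Bb _ _ (~` K) 1 0);
    [exact: bU|move=> x nK; by rewrite (indNK x nK)
    |move=> x /contrapT nK; by rewrite (indK x nK)].
have ciBb : Bb (fun w => c * \1_(~` K) w).
  apply: (@twoval_Bb _ _ (~` K) c 0);
    [exact: bU|move=> x nK; by rewrite (indNK x nK) mulr1
    |move=> x /contrapT nK; by rewrite (indK x nK) mulr0].
have dBb : Bb (fun _ : T => del) := Cb_Bb (Cb_cst del).
have Eh : Ehat h <= del + c * Ehat (\1_(~` K)).
  by have := hadd _ _ dBb ciBb; rewrite hc hhom.
have one X Y : Cb X -> Cb Y -> (forall x, K x -> `|X x - Y x| <= del) ->
    (forall x, `|X x - Y x| <= c) -> E X - E Y <= del + c * Ehat (\1_(~` K)).
  move=> cX cY hX hY; apply: le_trans (hd _ _ cX cY) _; apply: le_trans Eh.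
  apply: hm => //; first exact: Cb_Bb (Cb_sub cX cY).
  move=> w; rewrite /h /=; have [Kw|nKw] := pselect (K w).
    by rewrite indK // mulr0 addr0; apply: le_trans (ler_norm _) (hX w Kw).
  rewrite indNK // mulr1; apply: le_trans (ler_norm _) _.
  by apply: le_trans (hY w) _; rewrite lerDr.
have h1 := one _ _ cphi cps hK hall.
have h2 : E ps - E phi <= del + c * Ehat (\1_(~` K)).
  by apply: one => // x; rewrite distrC; [exact: hK|exact: hall].
rewrite ler_norml; apply/andP; split; lra.
Qed.

End expect.
Theorem mainTheorem1 (R : realType) (Omega : completePseudoMetricType R)
  (A : Type) (E : A -> (Omega -> R) -> R) (Ehat : (Omega -> R) -> R) :
  hausdorff_space Omega ->
  separable_space Omega ->
  (forall a : A, nonlinear_expectation (@Cb R Omega) (E a)) ->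
  sublinear_expectation (@Bb R Omega) Ehat ->
  tight Ehat ->
  (forall (a : A) (X Y : Omega -> R), Cb X -> Cb Y ->
     E a X - E a Y <= Ehat (X \- Y)) ->
  forall alpha : nat -> A,
  exists n : nat -> nat,
    {homo n : i j / (i < j)%N >-> (i < j)%N} /\
    forall phi : Omega -> R, Cb phi ->
      cauchy_seqR (fun i => E (alpha (n i)) phi).
Proof.
move=> hT [D0 [cD0 dD0]] hE hsub htight hdom alpha.
have [[x0 _]|empty] := pselect (exists x : Omega, True); last first.
  exists id; split => // phi cphi eps e0; exists 0%N => i j _ _.
  have -> : phi = fun _ => 0 by apply/funext => x; exfalso; apply: empty; exists x.
  by case: (hE (alpha i)) => -> _; case: (hE (alpha j)) => -> _; rewrite subrr normr0.
have [e de] : exists e : nat -> Omega, forall x r, 0 < r -> exists j, ball x r (e j).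
  have /pfcard_geP [D00|/surjfunPex [f Df]] := cD0.
    exfalso; have [y [_ ]] := dD0 setT (ex_intro _ x0 I) openT.
    by rewrite D00.
  exists f => x r r0.
  have [y [yi]] := dD0 _ (ex_intro _ x (nbhsx_ballx x _ r0)) (@open_interior _ (ball x r)).
  by rewrite Df => -[j _ fj]; exists j; rewrite fj; exact: interior_subset.
pose I := (nat * nat * nat * seq (nat * int))%type.
pose fam (k : nat) : Omega -> R := match @unpickle I k with
  | Some p => psi e p.1.1.1 p.1.1.2 p.1.2 p.2 | None => fun _ => 0 end.
have famCb k : Cb (fam k) /\ exists B, forall x, `|fam k x| <= B.
  rewrite /fam; case: unpickle => [[[[Mc L] N] s]|] /=.
    split; last by exists Mc%:R => x; exact: psi_bound.
    by split; [exact: psi_cont|exists Mc%:R => x; exact: psi_bound].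
  by split; [exact: Cb_cst|exists 0 => x; rewrite normr0].
have ub k : exists B, forall n, `|E (alpha n) (fam k)| <= B.
  have [cf [B HB]] := famCb k; exists B => n.
  exact: E_bound (hE (alpha n)) cf HB.
have [d [dinc dC]] := diag ub.
exists d; split => // phi [cphi [M hM]] eps e0.
have M0 : 0 <= M by apply: le_trans (hM x0).
pose Mc := (Num.truncn M).+1.
have MMc : M <= Mc%:R by apply: ltW; exact: truncnS_gt.
pose c := M + Mc%:R.
have c0 : 0 <= c by rewrite addr_ge0.
have e60 : 0 < eps / 6 by rewrite divr_gt0.
pose eta := eps / 6 / (c + 1).
have c10 : 0 < c + 1 by rewrite ltr_wpDl.
have eta0 : 0 < eta by rewrite divr_gt0.
have [K [cK hK]] := htight eta eta0.
have [L [N [s Hs]]] := approx de cK cphi hM e60 MMc.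
pose ps := psi e Mc L N s.
pose k := pickle ((Mc, L, N, s) : I).
have famk : fam k = ps by rewrite /fam pickleK.
have cps : Cb ps.
  by split; [exact: psi_cont|exists Mc%:R => x; exact: psi_bound].
have hkey a : `|E a phi - E a ps| <= eps / 3.
  have hall x : `|phi x - ps x| <= c.
    by apply: le_trans (ler_normB _ _) _; rewrite lerD // psi_bound.
  have := key hT cK hsub (hdom a) (conj cphi (ex_intro _ M hM)) cps (ltW e60) c0 Hs hall.
  have ce : c * Ehat (\1_(~` K)) <= c * eta by rewrite ler_wpM2l // ltW.
  have ce2 : (c + 1) * eta = eps / 6.
    have cn : c + 1 != 0 by rewrite lt0r_neq0.
    by rewrite /eta; field.
  have et : 0 <= eta by exact: ltW.
  move=> h; apply: le_trans h _.
  have -> : eps / 3 = eps / 6 + eps / 6 by field.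
  rewrite lerD2l; apply: le_trans ce _.
  lra.
have e30 : 0 < eps / 3 by rewrite divr_gt0.
have [N0 HN0] := dC k (eps / 3) e30.
exists N0 => i j Ni Nj.
have := HN0 i j Ni Nj; rewrite /= famk.
have := hkey (alpha (d i)); have := hkey (alpha (d j)).
rewrite !ler_norml !ltr_norml => /andP[a1 a2] /andP[b1 b2] /andP[c1 c2].
apply/andP; split; lra.
Qed.
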